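(* Let $\ell\ge1$ and let $w$ be an $\ell$-perfect word over $\{0,1\}$ such that $|w|$ is a multiple of $\ell2^{2\ell}$. Then there exists a $2\ell$-perfect word $z$ over $\{0,1\}$ of length $2|w|$ such that $\mathrm{even}(z)=w$.
   Context: For a finite word $z=a_1\cdots a_m$, $\mathrm{even}(z)=a_2a_4\cdots$ (symbols at even positions). For words $w,u$, $|w|^{al}_u=|\{i: w[i..i+|u|-1]=u,\ i\equiv1\bmod|u|\}|$. A finite binary word $w$ is $\ell$-perfect if $|w|$ is a multiple of $\ell$ and every word $u$ of length $\ell$ satisfies $|w|^{al}_u=|w|/(\ell2^\ell)$. *)

(* Defs.v *)
From mathcomp Require Import all_boot.
Set Implicit Arguments. Unset Strict Implicit. Unset Printing Implicit Defensive.

(* Binary words are [seq bool]; positions are 0-indexed internally. *)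

(* even z = a_2 a_4 ... : symbols at even 1-indexed positions, i.e. at
   0-indexed positions i with odd i. *)
Definition even_word (z : seq bool) : seq bool :=
  [seq nth false z i | i <- iota 0 (size z) & odd i].

Definition factor (w : seq bool) (i m : nat) : seq bool := take m (drop i w).

(* |w|^{al}_u : number of 1-indexed i with i = 1 mod |u| (0-indexed i
   divisible by |u|) such that w[i..i+|u|-1] = u (occurrence fully inside w). *)
Definition aligned_count (w u : seq bool) : nat :=
  count (fun i => (size u %| i) && (i + size u <= size w) && (factor w i (size u) == u))
        (iota 0 (size w)).

(* w is l-perfect: l | |w| and every u of length l satisfies
   |w|^{al}_u = |w| / (l 2^l)  (stated multiplicatively, exactly). *)
Definition perfect (l : nat) (w : seq bool) : Prop :=
  l %| size w /\
  forall u : seq bool, size u = l -> aligned_count w u * (l * 2 ^ l) = size w.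

(* Main.v *)
Require Import Defs.
From mathcomp Require Import all_boot zify.

Lemma count_mod_iota (M j c : nat) : j < M ->
  count (fun t => t %% M == j) (iota 0 (c * M)) = c.
Proof.
move=> jM; elim: c => [|c IH] //.
rewrite mulSn addnC iotaD count_cat IH add0n -{1}(addn0 (c * M)) iotaDl count_map.
rewrite (@eq_in_count _ _ (pred1 j)); last by move=> t; rewrite mem_iota /= => ht; rewrite modnMDl modn_small.
rewrite count_uniq_mem ?iota_uniq // mem_iota /=; lia.
Qed.

Lemma count_pos (T : eqType) (d : T) (s : seq T) (y : T) (M j : nat) :
  count (fun i => (nth d s i == y) && (count (pred1 y) (take i s) %% M == j))
        (iota 0 (size s)) =
  count (fun t => t %% M == j) (iota 0 (count (pred1 y) s)).
Proof.
elim/last_ind: s => [|s x IH] //.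
rewrite size_rcons -addn1 iotaD count_cat /= addn0.
rewrite -cats1 count_cat /= addn0 iotaD count_cat -IH.
rewrite nth_cat ltnn subnn /= take_size_cat //.
congr (_ + _).
  apply: eq_in_count => i; rewrite mem_iota => /andP [_ hi].
  by rewrite nth_cat hi takel_cat // ltnW.
by case: (x == y) => //=; rewrite addn0.
Qed.

Lemma count_mult (l B : nat) (Q : pred nat) : 0 < l ->
  count (fun i => (l %| i) && Q i) (iota 0 (B * l)) =
  count (fun k => Q (k * l)) (iota 0 B).
Proof.
case: l => // l _; elim: B => [|B IH] //.
rewrite mulSn addnC iotaD count_cat IH add0n -[B.+1]addn1 iotaD count_cat /=.
congr (_ + _); rewrite add0n addn0 dvdn_mull //=.
rewrite -[RHS]addn0; congr (_ + _).
apply/eqP; rewrite -leqn0 leqNgt -has_count; apply/hasPn => i.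
rewrite mem_iota => /andP [h1 h2] /=.
rewrite -(subnKC (ltnW h1)) dvdn_addr ?dvdn_mull //.
apply/negP => /andP [hd _]; have := dvdn_leq _ hd; lia.
Qed.

Lemma aligned_blocks (w u : seq bool) (l B : nat) : 0 < l -> size w = B * l ->
  size u = l ->
  aligned_count w u = count (fun k => factor w (k * l) l == u) (iota 0 B).
Proof.
move=> l0 hw hu; rewrite /aligned_count hu hw.
rewrite (eq_count (a2 := fun i => (l %| i) && ((i + l <= B * l) && (factor w i l == u)))); last first.
  by move=> i; rewrite andbA.
rewrite count_mult //; apply: eq_in_count => k; rewrite mem_iota => /andP [_ hk] /=.
have -> : k * l + l <= B * l by rewrite addnC -mulSn leq_mul2r hk orbT.
done.
Qed.

Lemma flat_factor (ss : seq (seq bool)) (L k : nat) :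
  all (fun s => size s == L) ss -> k < size ss ->
  factor (flatten ss) (k * L) L = nth [::] ss k.
Proof.
elim: ss k => [|s ss IH] k //= /andP [/eqP hs hall] hk.
case: k hk => [|k] hk.
  by rewrite /factor /= drop0 -hs take_size_cat.
rewrite /factor mulSn addnC -drop_drop.
have -> : drop L (s ++ flatten ss) = flatten ss by rewrite -hs drop_size_cat.
exact: IH.
Qed.

Lemma size_flat (T : Type) (ss : seq (seq T)) (L : nat) :
  all (fun s => size s == L) ss -> size (flatten ss) = size ss * L.
Proof.
elim: ss => [|s ss IH] //= /andP [/eqP hs hall].
by rewrite size_cat IH // hs mulSn.
Qed.

Lemma flat_blocks (B l : nat) (w : seq bool) : size w = B * l ->
  flatten [seq factor w (k * l) l | k <- iota 0 B] = w.
Proof.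
elim: B w => [|B IH] w hw /=.
  by case: w hw.
rewrite -[RHS](cat_take_drop l w); congr (_ ++ _).
  by rewrite /factor mul0n drop0.
rewrite -(IH (drop l w)); last by rewrite size_drop hw mulSn addKn.
rewrite (iotaDl 1 0) -map_comp; congr flatten; apply: eq_map => k /=.
by rewrite /factor drop_drop add1n mulSn addnC.
Qed.

Fixpoint inter (x y : seq bool) : seq bool :=
  match x, y with a :: x', b :: y' => a :: b :: inter x' y' | _, _ => [::] end.
Fixpoint odds (s : seq bool) : seq bool :=
  match s with a :: b :: r => a :: odds r | _ => [::] end.
Fixpoint evens (s : seq bool) : seq bool :=
  match s with a :: b :: r => b :: evens r | _ => [::] end.

Lemma size_inter x y : size x = size y -> size (inter x y) = 2 * size x.
Proof.
elim: x y => [|a x IH] [|b y] //= [h]; rewrite IH //; lia.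
Qed.

Lemma inter_eq x y x' y' : size x = size y -> size x' = size y' ->
  (inter x y == inter x' y') = (x == x') && (y == y').
Proof.
move=> h h'; apply/eqP/andP => [|[/eqP -> /eqP ->]] //.
elim: x y x' y' h h' => [|a x IH] [|b y] [|a' x'] [|b' y'] //= [h] [h'] [-> -> e].
by have [/eqP -> /eqP ->] := IH _ _ _ h h' e.
Qed.

Lemma decomp n u : size u = 2 * n ->
  [/\ u = inter (odds u) (evens u), size (odds u) = n & size (evens u) = n].
Proof.
elim: n u => [|n IH] [|a [|b u]] //= h; try lia.
have [e1 e2 e3] := IH u ltac:(lia).
by rewrite -e1 e2 e3.
Qed.

Lemma even_cons2 a b s : even_word (a :: b :: s) = b :: even_word s.
Proof.
rewrite /even_word /=.
congr (_ :: _).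
rewrite (iotaDl 2 0) filter_map -map_comp.
rewrite (@eq_filter _ _ odd) //.
move=> i; rewrite /preim /=.
by rewrite add0n negbK.
Qed.

Lemma even_inter x y s : size x = size y ->
  even_word (inter x y ++ s) = y ++ even_word s.
Proof.
elim: x y => [|a x IH] [|b y] //= [h].
by rewrite even_cons2 IH.
Qed.

Lemma even_flat (X Y : nat -> seq bool) (r : seq nat) :
  (forall k, k \in r -> size (X k) = size (Y k)) ->
  even_word (flatten [seq inter (X k) (Y k) | k <- r]) = flatten (map Y r).
Proof.
elim: r => [|k r IH] h /=; first by rewrite /even_word.
rewrite even_inter ?IH //; last by apply: h; rewrite inE eqxx.
by move=> k' hk; apply: h; rewrite inE hk orbT.
Qed.

Theorem lemma10 (l : nat) (w : seq bool) :
  1 <= l -> perfect l w -> l * 2 ^ (2 * l) %| size w ->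
  exists z : seq bool,
    perfect (2 * l) z /\ size z = 2 * size w /\ even_word z = w.
Proof.
move=> l1 [ldiv hperf] hdiv.
have [B hB] := dvdnP ldiv.
have [c hc] := dvdnP hdiv.
set M := 2 ^ l.
have M0 : 0 < M by rewrite expn_gt0.
pose W := [seq tval t | t <- enum {: l.-tuple bool}].
have sW : size W = M by rewrite size_map -cardE card_tuple card_bool.
have uW : uniq W by rewrite map_inj_uniq ?enum_uniq //; exact: val_inj.
have inW : forall x, size x = l -> x \in W.
  move=> x hx; have hx' : size x == l by rewrite hx.
  by apply/mapP; exists (Tuple hx'); rewrite ?mem_enum.
have szW : forall x, x \in W -> size x = l.
  by move=> x /mapP [t _ ->]; rewrite size_tuple.
pose wb k := factor w (k * l) l.
have swb : forall k, k < B -> size (wb k) = l.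
  move=> k hk; rewrite /wb /factor size_takel // size_drop hB.
  rewrite -mulnBl leq_pmull // subn_gt0 //.
pose s := map wb (iota 0 B).
pose xk k := nth [::] W (count (pred1 (wb k)) (take k s) %% M).
have sxk : forall k, size (xk k) = l.
  move=> k; apply: szW; apply: mem_nth; rewrite sW ltn_mod //.
pose zb k := inter (xk k) (wb k).
have szb : forall k, k < B -> size (zb k) = 2 * l.
  by move=> k hk; rewrite size_inter sxk ?swb.
pose z := flatten (map zb (iota 0 B)).
have allz : all (fun t => size t == 2 * l) (map zb (iota 0 B)).
  by apply/allP => t /mapP [k]; rewrite mem_iota => /andP [_ hk] ->; rewrite szb.
have sz : size z = B * (2 * l) by rewrite (@size_flat _ _ _ allz) size_map size_iota.
exists z; split; last split.
- split; first by rewrite sz dvdn_mull.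
  move=> u hu.
  rewrite (@aligned_blocks z u (2 * l) B) //; last lia.
  rewrite (@eq_in_count _ _ (fun k => zb k == u)); last first.
    move=> k; rewrite mem_iota => /andP [_ hk].
    rewrite flat_factor // ?size_map ?size_iota //.
    by rewrite (nth_map 0) ?size_iota // nth_iota.
  have [eu hx hy] := @decomp l u hu.
  set x := odds u in eu hx; set y := evens u in eu hy.
  set j := index x W.
  have jM : j < M by rewrite -sW index_mem inW.
  rewrite (@eq_in_count _ _ (fun k => (nth [::] s k == y) &&
     (count (pred1 y) (take k s) %% M == j))); last first.
    move=> k; rewrite mem_iota => /andP [_ hk].
    rewrite eu /zb inter_eq ?sxk ?swb ?hx ?hy //.
    rewrite /s (nth_map 0) ?size_iota // nth_iota // add0n.
    case: (wb k =P y) => [e|] /=; last by rewrite andbF.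
    by rewrite andbT /xk e -{1}(nth_index [::] (inW x hx)) nth_uniq // sW ?ltn_mod.
  have -> : B = size s by rewrite size_map size_iota.
  rewrite count_pos.
  have hcnt : count (pred1 y) s = c * M.
    have := hperf y hy.
    rewrite (@aligned_blocks w y l B) // -/wb.
    rewrite /s count_map.
    rewrite hc => h.
    have e2 : 2 ^ (2 * l) = M * M by rewrite mul2n -addnn expnD.
    rewrite e2 in h.
    apply/eqP; rewrite -(@eqn_pmul2r (l * M)); last by rewrite muln_gt0 M0 andbT.
    rewrite [X in _ == X](_ : _ = c * (l * (M * M))); last by lia.
    by rewrite (@eq_count _ _ (fun k => wb k == y)) ?h // => k /=.
  rewrite hcnt count_mod_iota // sz.
  have hBc : B = c * 2 ^ (2 * l).
    apply/eqP; rewrite -(eqn_pmul2r l1) -hB hc; apply/eqP.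
    by rewrite mulnCA mulnC.
  rewrite hBc; set P := 2 ^ (2 * l); nia.
- by rewrite sz hB; lia.
- rewrite /z /zb even_flat; first by rewrite flat_blocks.
  by move=> k; rewrite mem_iota => /andP [_ hk]; rewrite sxk swb.
Qed.
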